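(* Let $\mathsf H_\downarrow$ be any conditional entropy of the form below, and let $|\psi\rangle_{AEFZ}=\sum_{z\in\mathbb Z_d}\sqrt{P_Z(z)}|z\rangle_A|z\rangle_Z|\sigma_z\rangle_{EF}$ be a normalized pure state with $P_Z$ a probability distribution and $|\sigma_z\rangle_{EF}$ arbitrary unit vectors. Then $\mathsf H_\downarrow(A|E)_\psi+\mathsf H^\perp_\downarrow(X_A|FZ)_\psi\le\log|A|$.
   Context: $\mathcal H_A\cong\mathbb C^d$ with standard basis $\{|z\rangle\}$ and conjugate basis $|\tilde x\rangle=d^{-1/2}\sum_z\omega^{xz}|z\rangle$, $\omega=e^{2\pi i/d}$. A divergence $\mathsf D$ satisfies data processing under quantum channels, $\mathsf D(\rho,c\sigma)=\mathsf D(\rho,\sigma)-\log c$, dominance ($\sigma'\ge\sigma\Rightarrow\mathsf D(\rho,\sigma')\le\mathsf D(\rho,\sigma)$), and $\mathsf D(\rho,\rho)=0$; $\mathsf H_\downarrow(A|B)_\rho=-\mathsf D(\rho_{AB},\mathbb I_A\otimes\rho_B)$; dual $\mathsf H^\perp_\downarrow(A|B)_\rho=-\mathsf H_\downarrow(A|C)_\rho$ for a purification $\rho_{ABC}$. $\mathsf H(A|E)_\psi$ refers to the quantum system $A$ of $\psi_{AE}$; $\mathsf H^\perp(X_A|FZ)_\psi$ is the dual entropy of the CQ state obtained by measuring $A$ in the conjugate basis, $\sum_x|x\rangle\langle x|\otimes\mathrm{Tr}_A[(|\tilde x\rangle\langle\tilde x|_A\otimes\mathbb I)\psi_{AFZ}]$.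 *)

(* Defs.v *)
From mathcomp Require Import all_boot.
From Stdlib Require Import Reals.

Set Implicit Arguments.
Unset Strict Implicit.
Unset Printing Implicit Defensive.

Definition cplx : Type := (R * R)%type.
Definition C0 : cplx := (0%R, 0%R).
Definition C1 : cplx := (1%R, 0%R).
Definition RC (r : R) : cplx := (r, 0%R).
Definition Cadd (x y : cplx) : cplx := ((x.1 + y.1)%R, (x.2 + y.2)%R).
Definition Cmul (x y : cplx) : cplx :=
  ((x.1 * y.1 - x.2 * y.2)%R, (x.1 * y.2 + x.2 * y.1)%R).
Definition Cconj (x : cplx) : cplx := (x.1, (- x.2)%R).
Definition Cnorm2 (x : cplx) : R := (x.1 * x.1 + x.2 * x.2)%R.
Definition Cexpi (t : R) : cplx := (cos t, sin t).

(* Op T U = matrices with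
   rows indexed by T and columns by U (linear maps cplx^U -> cplx^T). *)
Definition Op (T U : finType) : Type := T -> U -> cplx.

Definition mul (T U V : finType) (A : Op T U) (B : Op U V) : Op T V :=
  fun i k => \big[Cadd/C0]_(j : U) Cmul (A i j) (B j k).
Definition adj (T U : finType) (A : Op T U) : Op U T :=
  fun j i => Cconj (A i j).
Definition idop (T : finType) : Op T T :=
  fun i j => if i == j then C1 else C0.
Definition trace (T : finType) (A : Op T T) : cplx := \big[Cadd/C0]_(i : T) A i i.
Definition scale (T U : finType) (c : R) (A : Op T U) : Op T U :=
  fun i j => Cmul (RC c) (A i j).
Definition subop (T U : finType) (A B : Op T U) : Op T U :=
  fun i j => Cadd (A i j) (Cmul (RC (-1)%R) (B i j)).

Definition quad (T : finType) (A : Op T T) (v : T -> cplx) : cplx :=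
  \big[Cadd/C0]_(i : T) \big[Cadd/C0]_(j : T) Cmul (Cmul (Cconj (v i)) (A i j)) (v j).
Definition psd (T : finType) (A : Op T T) : Prop :=
  forall v : T -> cplx, (quad A v).2 = 0%R /\ (0 <= (quad A v).1)%R.
Definition density (T : finType) (rho : Op T T) : Prop :=
  psd rho /\ trace rho = C1.
Definition loewner_le (T : finType) (sigma sigma' : Op T T) : Prop :=
  psd (subop sigma' sigma).

(* quantum channels T -> U in Kraus form (every CPTP map has one) *)
Definition is_kraus (T U K : finType) (Kr : K -> Op U T) : Prop :=
  (fun i j => \big[Cadd/C0]_(k : K) mul (adj (Kr k)) (Kr k) i j) = @idop T.
Definition channel (T U K : finType) (Kr : K -> Op U T) (rho : Op T T) : Op U U :=
  fun i j => \big[Cadd/C0]_(k : K) mul (mul (Kr k) rho) (adj (Kr k)) i j.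

Definition kron (T U : finType) (M : Op T T) (N : Op U U) : Op (prod T U) (prod T U) :=
  fun p q => Cmul (M p.1 q.1) (N p.2 q.2).
Definition ptrace1 (T U : finType) (M : Op (prod T U) (prod T U)) : Op U U :=
  fun u u' => \big[Cadd/C0]_(t : T) M (t, u) (t, u').
Definition ptrace2 (T U : finType) (M : Op (prod T U) (prod T U)) : Op T T :=
  fun t t' => \big[Cadd/C0]_(u : U) M (t, u) (t', u).
Definition proj (T : finType) (v : T -> cplx) : Op T T :=
  fun i j => Cmul (v i) (Cconj (v j)).

(* ---------- extended reals R u {+oo}; None = +oo ---------- *)
Definition Rbar : Type := option R.
Definition Rbar_le (x y : Rbar) : Prop :=
  match x, y with
  | _, None => True
  | None, Some _ => False
  | Some a, Some b => (a <= b)%R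
  end.
Definition Rbar_shift (x : Rbar) (r : R) : Rbar := option_map (fun a => (a + r)%R) x.

Definition divergence_family : Type :=
  forall T : finType, Op T T -> Op T T -> Rbar.

Definition is_divergence (D : divergence_family) : Prop :=
  (forall (T U K : finType) (Kr : K -> Op U T), is_kraus Kr ->
     forall rho sigma : Op T T, density rho -> psd sigma ->
       Rbar_le (D U (channel Kr rho) (channel Kr sigma)) (D T rho sigma))
  /\
  (forall (T : finType) (rho sigma : Op T T) (c : R), density rho -> psd sigma ->
     (0 < c)%R -> D T rho (scale c sigma) = Rbar_shift (D T rho sigma) (- ln c)%R)
  /\
  (forall (T : finType) (rho sigma sigma' : Op T T), density rho -> psd sigma ->
     loewner_le sigma sigma' -> Rbar_le (D T rho sigma') (D T rho sigma))
  /\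
  (forall (T : finType) (rho : Op T T), density rho -> D T rho rho = Some 0%R).

(* minus the conditional entropy:
   Dcond D rho_AB = D(rho_AB, I_A (x) rho_B) = - H_down(A|B)_rho *)
Definition Dcond (D : divergence_family) (A B : finType)
  (rho : Op (prod A B) (prod A B)) : Rbar :=
  D (prod A B) rho (kron (@idop A) (ptrace1 rho)).

(* |psi>_{AEFZ} = sum_z sqrt(P z) |z>_A |z>_Z |sigma_z>_{EF},
   systems ordered as ((A, E), (F, Z)) with A = Z = 'I_d *)
Definition psi_vec (d : nat) (E F : finType) (P : 'I_d -> R)
  (sig : 'I_d -> prod E F -> cplx) : prod (prod 'I_d E) (prod F 'I_d) -> cplx :=
  fun p => let: ((a, e), (f, z)) := p in
           if a == z then Cmul (RC (sqrt (P z))) (sig z (e, f)) else C0.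

Definition rho_AFZ (d : nat) (E F : finType) (rho : Op (prod (prod 'I_d E) (prod F 'I_d))
     (prod (prod 'I_d E) (prod F 'I_d))) : Op (prod 'I_d (prod F 'I_d)) (prod 'I_d (prod F 'I_d)) :=
  fun p q => \big[Cadd/C0]_(e : E) rho ((p.1, e), p.2) ((q.1, e), q.2).

Definition conj_basis (d : nat) (x : 'I_d) : 'I_d -> cplx :=
  fun z => Cmul (RC (/ sqrt (INR d))) (Cexpi (2 * PI * INR x * INR z / INR d)%R).

(* CQ state  sum_x |x><x| (x) Tr_A[(|x~><x~|_A (x) I) psi_{AFZ}] on X (FZ) *)
Definition cq_state (d : nat) (G : finType) (M : Op (prod 'I_d G) (prod 'I_d G)) :
  Op (prod 'I_d G) (prod 'I_d G) :=
  fun p q => if p.1 == q.1 then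
    \big[Cadd/C0]_(a : 'I_d) \big[Cadd/C0]_(a' : 'I_d)
      Cmul (Cmul (Cconj (conj_basis p.1 a)) (M (a, p.2) (a', q.2))) (conj_basis p.1 a')
  else C0.

Definition marg_XC (X G Cs : finType) (M : Op (prod (prod X G) Cs) (prod (prod X G) Cs)) :
  Op (prod X Cs) (prod X Cs) :=
  fun p q => \big[Cadd/C0]_(g : G) M ((p.1, g), p.2) ((q.1, g), q.2).

(* Main.v *)
Require Import Defs.
From mathcomp Require Import all_boot.
From Stdlib Require Import Reals Lra Psatz.
From mathcomp Require Import all_order all_algebra.
From mathcomp Require Import Rstruct complex.
From Stdlib Require Import FunctionalExtensionality.
Set Implicit Arguments. Unset Strict Implicit. Unset Printing Implicit Defensive.
Import Order.TTheory GRing.Theory Num.Theory.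
Import Defs.
Local Open Scope complex_scope.
Local Open Scope ring_scope.

Notation CC := (complex R).

Definition c2C (x : cplx) : CC := x.1 +i* x.2.
Definition C2c (z : CC) : cplx := let: a +i* b := z in (a, b).

Lemma c2CK z : c2C (C2c z) = z. Proof. by case: z. Qed.
Lemma c2C_inj : injective c2C.
Proof. by move=> [a b] [c d] [-> ->]. Qed.
Lemma c2C_add x y : c2C (Cadd x y) = c2C x + c2C y.
Proof. by case: x => a b; case: y => c e. Qed.
Lemma c2C_mul x y : c2C (Cmul x y) = c2C x * c2C y.
Proof. by case: x => a b; case: y => c e. Qed.
Lemma c2C_conj x : c2C (Cconj x) = (c2C x)^*.
Proof. by case: x. Qed.
Lemma c2C_RC r : c2C (RC r) = r%:C.
Proof. by []. Qed.
Lemma c2C_C0 : c2C Defs.C0 = 0. Proof. by []. Qed.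
Lemma c2C_C1 : c2C Defs.C1 = 1. Proof. by []. Qed.
Lemma c2C_sum (I : finType) (F : I -> cplx) :
  c2C (\big[Cadd/C0]_(i : I) F i) = \sum_(i : I) c2C (F i).
Proof. exact: (big_morph c2C c2C_add c2C_C0). Qed.

Definition cm (T U : finType) (M : Op T U) : T -> U -> CC := fun i j => c2C (M i j).

Lemma cm_mul (T U V : finType) (A : Op T U) (B : Op U V) i k :
  cm (mul A B) i k = \sum_j cm A i j * cm B j k.
Proof. by rewrite /cm /mul c2C_sum; apply: eq_bigr => j _; rewrite c2C_mul. Qed.
Lemma cm_adj (T U : finType) (A : Op T U) j i : cm (adj A) j i = (cm A i j)^*.
Proof. by rewrite /cm /adj c2C_conj. Qed.
Lemma cm_idop (T : finType) (i j : T) : cm (@idop T) i j = (i == j)%:R.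
Proof. by rewrite /cm /idop; case: eqP. Qed.
Lemma cm_scale (T U : finType) c (A : Op T U) i j : cm (scale c A) i j = c%:C * cm A i j.
Proof. by rewrite /cm /scale c2C_mul. Qed.
Lemma cm_subop (T U : finType) (A B : Op T U) i j : cm (subop A B) i j = cm A i j - cm B i j.
Proof. rewrite /cm /subop c2C_add c2C_mul c2C_RC.
have -> : (((-1)%R : R)%:C : CC) = - 1.
  apply/eqP; rewrite eq_complex; apply/andP; split; apply/eqP => /=; [reflexivity| by rewrite oppr0].
by rewrite mulN1r. Qed.
Lemma c2C_trace (T : finType) (A : Op T T) : c2C (trace A) = \sum_i cm A i i.
Proof. by rewrite /trace c2C_sum. Qed.
Lemma cm_kron (T U : finType) (M : Op T T) (N : Op U U) p q :
  cm (kron M N) p q = cm M p.1 q.1 * cm N p.2 q.2.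
Proof. by rewrite /cm /kron c2C_mul. Qed.
Lemma cm_ptrace1 (T U : finType) (M : Op (T * U)%type (T * U)%type) u u' :
  cm (ptrace1 M) u u' = \sum_t cm M (t, u) (t, u').
Proof. by rewrite /cm /ptrace1 c2C_sum. Qed.
Lemma cm_ptrace2 (T U : finType) (M : Op (T * U)%type (T * U)%type) t t' :
  cm (ptrace2 M) t t' = \sum_u cm M (t, u) (t', u).
Proof. by rewrite /cm /ptrace2 c2C_sum. Qed.
Lemma cm_proj (T : finType) (v : T -> cplx) i j :
  cm (proj v) i j = c2C (v i) * (c2C (v j))^*.
Proof. by rewrite /cm /proj c2C_mul c2C_conj. Qed.
Lemma cm_channel (T U K : finType) (Kr : K -> Op U T) (rho : Op T T) i j :
  cm (channel Kr rho) i j =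
  \sum_k \sum_t \sum_t' cm (Kr k) i t * cm rho t t' * (cm (Kr k) j t')^*.
Proof.
rewrite /cm /channel c2C_sum; apply: eq_bigr => k _.
rewrite -/(cm _ _ _) cm_mul.
under eq_bigr => t' _ do rewrite cm_mul cm_adj big_distrl /=.
rewrite exchange_big /=; apply: eq_bigr => t _; apply: eq_bigr => t' _ //.
Qed.
Lemma c2C_quad (T : finType) (A : Op T T) v :
  c2C (quad A v) = \sum_i \sum_j (c2C (v i))^* * cm A i j * c2C (v j).
Proof.
rewrite /quad c2C_sum; apply: eq_bigr => i _; rewrite c2C_sum; apply: eq_bigr => j _.
by rewrite !c2C_mul c2C_conj.
Qed.
Lemma cm_ext (T U : finType) (A B : Op T U) : (forall i j, cm A i j = cm B i j) -> A = B.
Proof.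
move=> H; apply: functional_extensionality => i; apply: functional_extensionality => j.
exact: c2C_inj (H i j).
Qed.

Definition nsq (u : CC) : R := let: a +i* b := u in (a * a + b * b)%R.
Lemma nsq_ge0 u : 0 <= nsq u.
Proof. by case: u => a b; rewrite /nsq -!expr2 addr_ge0 // sqr_ge0. Qed.
Lemma mul_conj u : u * u^* = (nsq u) +i* 0.
Proof.
case: u => a b; apply/eqP; rewrite eq_complex /=; apply/andP; split; apply/eqP.
  by rewrite mulrN opprK.
by rewrite mulrN mulrC addNr.
Qed.
Lemma nsq_eq0 u : nsq u = 0 -> u = 0.
Proof.
case: u => a b; rewrite /nsq => /eqP; rewrite -!expr2 paddr_eq0 ?sqr_ge0 // !sqrf_eq0.
by case/andP => /eqP -> /eqP ->.
Qed.
Lemma sum_realC (K : finType) (f : K -> R) :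
  \sum_k (f k +i* 0 : CC) = (\sum_k f k) +i* 0.
Proof.
symmetry; apply: (big_morph (fun r : R => (r +i* 0 : CC))) => //.
by move=> x y; apply/eqP; rewrite eq_complex /= addr0 !eqxx.
Qed.

Definition gram (T : finType) (M : Op T T) :=
  exists (K : finType) (W : T -> K -> CC), forall i j, cm M i j = \sum_k W i k * (W j k)^*.

Lemma psd_gram (T : finType) (M : Op T T) : gram M -> psd M.
Proof.
case=> K [W HW] v.
have E : c2C (quad M v) = \sum_k (\sum_i (c2C (v i))^* * W i k) * (\sum_i (c2C (v i))^* * W i k)^*.
  rewrite c2C_quad.
  under [RHS]eq_bigr => k _ do rewrite rmorph_sum big_distrl /=.
  rewrite [RHS]exchange_big /=; apply: eq_bigr => i _.
  under eq_bigr => j _ do rewrite HW big_distrr big_distrl /=.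
  rewrite exchange_big /=; apply: eq_bigr => k _.
  rewrite big_distrr /=; apply: eq_bigr => j _.
  by rewrite rmorphM /= conjCK -!mulrA [_ * c2C (v j)]mulrC.
have {}E : c2C (quad M v) = (\sum_k nsq (\sum_i (c2C (v i))^* * W i k)) +i* 0.
  by rewrite E -sum_realC; apply: eq_bigr => k _; exact: mul_conj.
case: (quad M v) E => q1 q2 /= [-> ->]; split=> //.
by apply/RleP; apply: sumr_ge0 => k _; exact: nsq_ge0.
Qed.

Lemma sum_option (T : finType) (F : option T -> CC) :
  \sum_(k : option T) F k = F None + \sum_(t : T) F (Some t).
Proof.
rewrite (bigD1 None) //=; congr (_ + _).
rewrite (reindex_omap Some (fun x => x)) /=; last by case.
by apply: eq_bigl => t; rewrite eqxx.
Qed.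
Lemma sum_pair (T U : finType) (F : (T * U)%type -> CC) :
  \sum_(p : T * U) F p = \sum_(i : T) \sum_(j : U) F (i, j).
Proof. by rewrite pair_big /=; apply: eq_bigr => -[]. Qed.


Definition adjm m n (M : 'M[CC]_(m, n)) : 'M[CC]_(n, m) := (map_mx Num.conj M)^T.
Lemma adjmM m n p (A : 'M[CC]_(m, n)) (B : 'M[CC]_(n, p)) : adjm (A *m B) = adjm B *m adjm A.
Proof. by rewrite /adjm map_mxM trmx_mul. Qed.
Lemma adjmK m n (A : 'M[CC]_(m, n)) : adjm (adjm A) = A.
Proof. by apply/matrixP => i j; rewrite !mxE conjCK. Qed.
Lemma adjmB m n (A B : 'M[CC]_(m, n)) : adjm (A - B) = adjm A - adjm B.
Proof. by apply/matrixP => i j; rewrite !mxE rmorphB. Qed.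

Lemma mx_gram0 m n (M : 'M[CC]_(m, n)) : M *m adjm M = 0 -> M = 0.
Proof.
move=> H; apply/matrixP => i j; rewrite mxE.
have := congr1 (fun X : 'M[CC]_m => X i i) H; rewrite !mxE.
under eq_bigr => k _ do rewrite !mxE mul_conj.
rewrite sum_realC => -[] /eqP; rewrite psumr_eq0; last by move=> k _; exact: nsq_ge0.
by move/allP/(_ j (mem_index_enum _))/implyP/(_ isT)/eqP/nsq_eq0.
Qed.

Lemma ginv n (rho : 'M[CC]_n) : adjm rho = rho ->
  exists S, [/\ adjm S = S, rho *m S *m rho = rho & S *m rho *m S = S].
Proof.
move=> rhoH.
have HG : rho *m pinvmx rho *m rho = rho by apply: mulmxKpV; exact: submx_refl.
move: (pinvmx rho) HG => G HG.
have HG' : rho *m adjm G *m rho = rho.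
  by have := congr1 (@adjm _ _) HG; rewrite !adjmM rhoH mulmxA.
exists (adjm G *m rho *m G); split.
- by rewrite !adjmM adjmK rhoH mulmxA.
- by rewrite !mulmxA HG' HG.
- rewrite !mulmxA -[adjm G *m rho *m G *m rho]mulmxA -[adjm G *m rho *m (G *m rho)]mulmxA.
  by rewrite [rho *m (G *m rho)]mulmxA HG -!mulmxA [rho *m (adjm G *m _)]mulmxA [rho *m adjm G *m _]mulmxA HG'.
Qed.

Lemma mx_uhlmann n m1 m2 (Am : 'M[CC]_(n, m1)) (Bm : 'M[CC]_(n, m2)) :
  Am *m adjm Am = Bm *m adjm Bm ->
  exists (Ym : 'M[CC]_(m1, m2)) (Pm : 'M[CC]_m1),
   [/\ Am *m Ym = Bm, Am *m Pm = Am, Ym *m adjm Ym = Pm, adjm Pm = Pm & Pm *m Pm = Pm].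
Proof.
move=> HAB.
move Hr: (Am *m adjm Am) HAB => rho HAB.
have rhoH : adjm rho = rho by rewrite -Hr adjmM adjmK.
have [S [SH HrS HSrS]] := ginv rhoH.
have key : forall p (X : 'M[CC]_(n, p)), X *m adjm X = rho -> rho *m S *m X = X.
  move=> p X HX; apply/eqP; rewrite -subr_eq0; apply/eqP/mx_gram0.
  rewrite adjmB !adjmM SH rhoH mulmxBl !mulmxBr.
  rewrite !mulmxA.
  have E2 : rho *m S *m X *m adjm X = rho by rewrite -mulmxA HX HrS.
  have E1 : rho *m S *m X *m adjm X *m S *m rho = rho by rewrite E2 HrS.
  have E3 : X *m adjm X *m S *m rho = rho by rewrite HX HrS.
  by rewrite E1 E2 E3 HX !subrr.
exists (adjm Am *m S *m Bm), (adjm Am *m S *m Am); split.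
- by rewrite !mulmxA Hr key // -HAB.
- by rewrite !mulmxA Hr key.
- rewrite !adjmM adjmK SH !mulmxA -[_ *m Bm *m adjm Bm]mulmxA -HAB.
  by rewrite -[_ *m S *m rho]mulmxA -[_ *m (S *m rho) *m S]mulmxA HSrS.
- by rewrite !adjmM adjmK SH mulmxA.
- rewrite !mulmxA -[_ *m Am *m adjm Am]mulmxA Hr.
  by rewrite -[_ *m S *m rho]mulmxA -[_ *m (S *m rho) *m S]mulmxA HSrS.
Qed.

Definition mxof (X Y : finType) (f : X -> Y -> CC) : 'M[CC]_(#|X|, #|Y|) :=
  \matrix_(i, j) f (enum_val i) (enum_val j).

Lemma sum_reindex (K : finType) (F : K -> CC) :
  \sum_(k : K) F k = \sum_(i < #|K|) F (enum_val i).
Proof. by rewrite (big_enum_val (A := K)). Qed.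

Lemma uhlmann (T K1 K2 : finType) (A : T -> K1 -> CC) (B : T -> K2 -> CC) :
 (forall r r', \sum_k A r k * (A r' k)^* = \sum_k B r k * (B r' k)^*) ->
 exists (Y : K1 -> K2 -> CC) (Pi : K1 -> K1 -> CC),
  [/\ forall r c, \sum_k A r k * Y k c = B r c,
      forall r k, \sum_k' A r k' * Pi k' k = A r k,
      forall k1 k2, \sum_c Y k1 c * (Y k2 c)^* = Pi k1 k2,
      forall k1 k2, (Pi k1 k2)^* = Pi k2 k1 &
      forall k1 k2, \sum_k Pi k1 k * Pi k k2 = Pi k1 k2].
Proof.
move=> H.
have HM : mxof A *m adjm (mxof A) = mxof B *m adjm (mxof B).
  apply/matrixP => i j; rewrite !mxE.
  under eq_bigr => k _ do rewrite !mxE.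
  under [RHS]eq_bigr => k _ do rewrite !mxE.
  by have := H (enum_val i) (enum_val j); rewrite (sum_reindex (K:=K1)) (sum_reindex (K:=K2)).
have [Ym [Pm [H1 H2 H3 H4 H5]]] := mx_uhlmann HM.
exists (fun k c => Ym (enum_rank k) (enum_rank c)), (fun k k' => Pm (enum_rank k) (enum_rank k')).
split.
- move=> r c; rewrite sum_reindex.
  have := congr1 (fun X : 'M[CC]_(_, _) => X (enum_rank r) (enum_rank c)) H1.
  rewrite !mxE !enum_rankK => <-; apply: eq_bigr => i _; by rewrite enum_valK mxE enum_rankK.
- move=> r k; rewrite sum_reindex.
  have := congr1 (fun X : 'M[CC]_(_, _) => X (enum_rank r) (enum_rank k)) H2.
  rewrite !mxE !enum_rankK => <-; apply: eq_bigr => i _; by rewrite enum_valK mxE enum_rankK.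
- move=> k1 k2; rewrite sum_reindex.
  have := congr1 (fun X : 'M[CC]_(_, _) => X (enum_rank k1) (enum_rank k2)) H3.
  rewrite !mxE => <-; apply: eq_bigr => i _; by rewrite enum_valK !mxE.
- move=> k1 k2.
  have := congr1 (fun X : 'M[CC]_(_, _) => X (enum_rank k2) (enum_rank k1)) H4.
  by rewrite !mxE.
- move=> k1 k2; rewrite sum_reindex.
  have := congr1 (fun X : 'M[CC]_(_, _) => X (enum_rank k1) (enum_rank k2)) H5.
  rewrite !mxE => <-; apply: eq_bigr => i _; by rewrite enum_valK.
Qed.

Section RealFacts.
Local Open Scope R_scope.
Lemma sin_ne0_aux (d u v : nat) : leq u.+1 d -> leq v.+1 d -> u <> v ->
  sin (PI * ((INR u - INR v) / INR d)) <> 0.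
Proof.
move=> /ssrnat.ltP Hu /ssrnat.ltP Hv Huv.
have Hu' := lt_INR _ _ Hu; have Hv' := lt_INR _ _ Hv.
have H0u := pos_INR u; have H0v := pos_INR v.
have Hd : 0 < INR d by lra.
have Hne : INR u <> INR v by move=> /INR_eq.
set q := (INR u - INR v) / INR d.
have Hq : q * INR d = INR u - INR v by rewrite /q; field; lra.
have HPI := PI_RGT_0.
case: (Rtotal_order q 0) => [Hlt|[Heq|Hgt]].
- have H1 : -1 < q by nra.
  have : 0 < sin (PI * - q) by apply: sin_gt_0; nra.
  rewrite Ropp_mult_distr_r_reverse sin_neg; lra.
- exfalso; rewrite Heq Rmult_0_l in Hq; lra.
- have H1 : q < 1 by nra.
  have : 0 < sin (PI * q) by apply: sin_gt_0; nra.
  lra.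
Qed.
End RealFacts.

Definition ee (t : R) : CC := c2C (Cexpi t).

Lemma c2C_ee t : c2C (Cexpi t) = ee t. Proof. by []. Qed.

Lemma ee_mul s t : ee s * ee t = ee (Rplus s t).
Proof.
rewrite /ee /c2C /Cexpi /=; apply/eqP; rewrite eq_complex /=; apply/andP; split; apply/eqP.
  by rewrite cos_plus; reflexivity.
by rewrite sin_plus addrC; reflexivity.
Qed.

Lemma ee_conj t : (ee t)^* = ee (Ropp t).
Proof.
rewrite /ee /c2C /Cexpi /=; apply/eqP; rewrite eq_complex /=; apply/andP; split; apply/eqP.
  by rewrite cos_neg.
by rewrite sin_neg; reflexivity.
Qed.

Lemma ee_0 : ee 0%:R = 1.
Proof.
rewrite /ee /c2C /Cexpi /=; apply/eqP; rewrite eq_complex /=; apply/andP; split; apply/eqP.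
  exact: cos_0.
exact: sin_0.
Qed.

Lemma ee_nat n : ee (Rmult (Rmult 2 PI) (INR n)) = 1.
Proof.
have E : Rmult (Rmult 2 PI) (INR n) = Rplus 0 (Rmult (Rmult 2 (INR n)) PI).
  by rewrite Rplus_0_l; ring.
rewrite /ee /c2C /Cexpi /= E cos_period sin_period cos_0 sin_0; reflexivity.
Qed.

Lemma ee_pow t n : ee t ^+ n = ee (Rmult (INR n) t).
Proof.
elim: n => [|n IH].
  by rewrite expr0 Rmult_0_l -ee_0.
rewrite exprS IH ee_mul S_INR; congr ee; ring.
Qed.

Lemma ee_nsq t : (ee t)^* * ee t = 1.
Proof. rewrite ee_conj ee_mul Rplus_opp_l; exact: ee_0. Qed.

Section RealFacts2.
Local Open Scope R_scope.
Lemma ss_d (d : nat) : 0 < INR d ->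
  Rmult (Rmult (Rinv (sqrt (INR d))) (Rinv (sqrt (INR d)))) (INR d) = 1.
Proof.
move=> Hd; rewrite -Rinv_mult sqrt_sqrt; last lra.
field; lra.
Qed.
Lemma theta_eq (d : nat) (u v : R) : 0 < INR d ->
  Rmult (INR d) (2 * PI * (u - v) / INR d) = Rplus (2 * PI * u) (Ropp (2 * PI * v)).
Proof. move=> Hd; field; lra. Qed.
Lemma cos_double (t : R) : cos t = 1 - 2 * sin (t / 2) * sin (t / 2).
Proof. rewrite -cos_2a_sin; congr cos; field. Qed.
End RealFacts2.

Lemma geo d (u v : 'I_d) : u != v ->
  \sum_(x < d) ee (Rmult (INR x) (Rdiv (Rmult (Rmult 2 PI) (Rminus (INR u) (INR v))) (INR d))) = 0.
Proof.
move=> Huv.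
set th := Rdiv _ (INR d).
have Hd : Rlt 0 (INR d).
  by apply: (lt_INR 0); apply/ssrnat.ltP; apply: leq_ltn_trans (ltn_ord u).
under eq_bigr => x _ do rewrite -ee_pow.
have HdP : ee th ^+ d = 1.
  rewrite ee_pow /th theta_eq // -ee_mul -ee_conj !ee_nat.
  by rewrite rmorph1 mulr1.
have Hne : ee th != 1.
  apply/eqP => H.
  have Hc : cos th = IZR 1 by have := congr1 (fun z : CC => complex.Re z) H.
  have Hs : sin (Rdiv th 2) = IZR 0.
    have := cos_double th; rewrite Hc => Hx.
    have : Rmult (sin (Rdiv th 2)) (sin (Rdiv th 2)) = IZR 0 by nra.
    by move/Rmult_integral => [].
  apply: (@sin_ne0_aux d u v (ltn_ord u) (ltn_ord v)).
    by move=> E; move: Huv; rewrite -val_eqE /= E eqxx.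
  by rewrite -Hs /th; congr sin; field; lra.
have := subrX1 (ee th) d; rewrite HdP subrr => /esym/eqP.
by rewrite mulf_eq0 subr_eq0 (negbTE Hne) /= => /eqP.
Qed.

Lemma conj_realC (r : R) : (r%:C : CC)^* = r%:C.
Proof. by apply/eqP; rewrite eq_complex /= oppr0 !eqxx. Qed.
Lemma mul_realC (r s : R) : (r%:C : CC) * s%:C = (Rmult r s)%:C.
Proof. by apply/eqP; rewrite eq_complex /= !mulr0 !mul0r subr0 addr0 !eqxx. Qed.

Lemma sum_ee d (u v : 'I_d) :
  \sum_(x < d) ee (Rmult (INR x) (Rdiv (Rmult (Rmult 2 PI) (Rminus (INR u) (INR v))) (INR d)))
  = (u == v)%:R * (INR d)%:C.
Proof.
case: eqP => [<-|/eqP Huv]; last by rewrite geo // mul0r.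
rewrite mul1r.
have E : forall x : 'I_d, ee (Rmult (INR x) (Rdiv (Rmult (Rmult 2 PI) (Rminus (INR u) (INR u))) (INR d))) = 1.
  move=> x; rewrite Rminus_diag Rmult_0_r /Rdiv Rmult_0_l Rmult_0_r; exact: ee_0.
rewrite (eq_bigr _ (fun x _ => E x)) sumr_const card_ord INRE.
by rewrite rmorph_nat.
Qed.

Definition bas d (x a : 'I_d) : CC := c2C (conj_basis x a).

Section RealFacts3.
Local Open Scope R_scope.
Lemma phase_eq (d : nat) (x a a' : R) : 0 < INR d ->
  Rplus (2 * PI * x * a / INR d) (Ropp (2 * PI * x * a' / INR d))
  = Rmult x (Rdiv (Rmult (Rmult 2 PI) (Rminus a a')) (INR d)).
Proof. move=> Hd; rewrite /Rdiv; field; lra. Qed.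
End RealFacts3.

Lemma dpos d (x : 'I_d) : Rlt 0 (INR d).
Proof. by apply: (lt_INR 0); apply/ssrnat.ltP; apply: leq_ltn_trans (ltn_ord x). Qed.

Lemma basO1 d (a a' : 'I_d) : \sum_x bas x a * (bas x a')^* = (a == a')%:R.
Proof.
have Hd := dpos a.
rewrite /bas /conj_basis.
under eq_bigr => x _ do rewrite !c2C_mul !c2C_RC rmorphM /= conj_realC mulrACA mul_realC !c2C_ee ee_conj ee_mul phase_eq //.
rewrite -big_distrr /= sum_ee mulrCA mul_realC ss_d //.
by rewrite mulr1.
Qed.

Section RealFacts4.
Local Open Scope R_scope.
Lemma phase_eq2 (d : nat) (x x' a : R) : 0 < INR d ->
  Rplus (Ropp (2 * PI * x * a / INR d)) (2 * PI * x' * a / INR d)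
  = Rmult a (Rdiv (Rmult (Rmult 2 PI) (Rminus x' x)) (INR d)).
Proof. move=> Hd; rewrite /Rdiv; field; lra. Qed.
End RealFacts4.

Lemma basO2 d (x x' : 'I_d) : \sum_a (bas x a)^* * bas x' a = (x == x')%:R.
Proof.
have Hd := dpos x.
rewrite /bas /conj_basis.
under eq_bigr => a _ do rewrite !c2C_mul !c2C_RC rmorphM /= conj_realC mulrACA mul_realC !c2C_ee ee_conj ee_mul phase_eq2 //.
rewrite -big_distrr /= sum_ee mulrCA mul_realC ss_d //.
by rewrite mulr1 eq_sym.
Qed.

Lemma basO3 d (x a : 'I_d) : (bas x a)^* * bas x a * (INR d)%:C = 1.
Proof.
have Hd := dpos x.
rewrite /bas /conj_basis !c2C_mul !c2C_RC rmorphM /= conj_realC mulrACA mul_realC !c2C_ee ee_nsq.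
by rewrite mulr1 mul_realC ss_d.
Qed.

From mathcomp Require Import ring.

Lemma channel_gram (T U K M : finType) (Kr : K -> Op U T) (rho : Op T T) (W : T -> M -> CC) :
 (forall t t', cm rho t t' = \sum_m W t m * (W t' m)^*) ->
 forall i j, cm (channel Kr rho) i j =
   \sum_k \sum_m (\sum_t cm (Kr k) i t * W t m) * (\sum_t cm (Kr k) j t * W t m)^*.
Proof.
move=> HW i j; rewrite cm_channel; apply: eq_bigr => k _.
under eq_bigr => t _ do under eq_bigr => t' _ do rewrite HW big_distrr big_distrl /=.
under eq_bigr => t _ do rewrite exchange_big /=.
rewrite exchange_big /=; apply: eq_bigr => m _.
rewrite rmorph_sum big_distrl /=; apply: eq_bigr => t _.
rewrite big_distrr /=; apply: eq_bigr => t' _.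
rewrite rmorphM /=; ring.
Qed.

Lemma gram_channel (T U K : finType) (Kr : K -> Op U T) (rho : Op T T) :
  gram rho -> gram (channel Kr rho).
Proof.
case=> M [W HW].
exists (K * M)%type, (fun i p => \sum_t cm (Kr p.1) i t * W t p.2) => i j.
by rewrite (@channel_gram _ _ _ _ Kr rho W HW) sum_pair.
Qed.

Lemma sum_delta (T : finType) (x : T) (F : T -> CC) : \sum_y (x == y)%:R * F y = F x.
Proof.
rewrite (bigD1 x) //= eqxx mul1r big1 ?addr0 // => y /negbTE.
by rewrite eq_sym => ->; rewrite mul0r.
Qed.
Lemma conj_nat n : ((n%:R : CC))^* = n%:R.
Proof. by rewrite rmorph_nat. Qed.

Lemma cm_cq d (G : finType) (M : Op ('I_d * G)%type ('I_d * G)%type) p q :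
  cm (cq_state M) p q = (p.1 == q.1)%:R *
    \sum_a \sum_a' (bas p.1 a)^* * cm M (a, p.2) (a', q.2) * bas p.1 a'.
Proof.
rewrite /cm /cq_state; case: eqP => _; last by rewrite mul0r.
rewrite mul1r c2C_sum; apply: eq_bigr => a _; rewrite c2C_sum; apply: eq_bigr => a' _.
by rewrite !c2C_mul c2C_conj.
Qed.

Lemma cm_rhoAFZ d (E F : finType) (M : Op ('I_d * E * (F * 'I_d))%type ('I_d * E * (F * 'I_d))%type) p q :
  cm (rho_AFZ M) p q = \sum_e cm M ((p.1, e), p.2) ((q.1, e), q.2).
Proof. by rewrite /cm /rho_AFZ c2C_sum. Qed.

Lemma trace_channel (T U K : finType) (Kr : K -> Op U T) (rho : Op T T) :
  is_kraus Kr -> trace (channel Kr rho) = trace rho.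
Proof.
move=> HK; apply: c2C_inj; rewrite !c2C_trace.
have HK' : forall t t', \sum_k \sum_i (cm (Kr k) i t)^* * cm (Kr k) i t' = (t == t')%:R.
  move=> t t'; rewrite -cm_idop -HK /cm c2C_sum; apply: eq_bigr => k _.
  by rewrite -/(cm _ _ _) cm_mul; apply: eq_bigr => i _; rewrite cm_adj.
under eq_bigr => i _ do rewrite cm_channel.
rewrite exchange_big /=.
under eq_bigr => k _ do rewrite exchange_big /=.
rewrite exchange_big /=.
under eq_bigr => t _ do (under eq_bigr => k _ do rewrite exchange_big /=; rewrite exchange_big /=).
transitivity (\sum_t \sum_t' cm rho t t' * (t' == t)%:R).
  apply: eq_bigr => t _; apply: eq_bigr => t' _; rewrite -HK' big_distrr /=.
  apply: eq_bigr => k _; rewrite big_distrr /=; apply: eq_bigr => i _; ring.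
apply: eq_bigr => t _; under eq_bigr => t' _ do rewrite mulrC eq_sym.
exact: sum_delta.
Qed.

Section Main.
Variables (d : nat) (E F : finType) (P : 'I_d -> R) (sig : 'I_d -> (E * F)%type -> cplx).
Hypothesis HP0 : forall z, Rle (IZR 0) (P z).
Variables (Cs : finType) (phi : ('I_d * (F * 'I_d) * Cs)%type -> cplx).
Hypothesis Hphi : ptrace2 (proj phi) = cq_state (rho_AFZ (proj (psi_vec P sig))).

Local Notation I := ('I_d).
Local Notation G := ((F * 'I_d)%type).
Definition ps (p : (I * E * G)%type) : CC := c2C (psi_vec P sig p).

Lemma ps_zero a e (g : G) : a != g.2 -> ps ((a, e), g) = 0.
Proof. by case: g => f z /= /negbTE H; rewrite /ps /psi_vec H. Qed.

Definition vv (x : I) (g : G) (e : E) : CC := \sum_a (bas x a)^* * ps ((a, e), g).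
Lemma vv_E x g e : vv x g e = (bas x g.2)^* * ps ((g.2, e), g).
Proof.
rewrite /vv (bigD1 g.2) //= big1 ?addr0 // => a Ha.
by rewrite ps_zero ?mulr0.
Qed.

Definition Amat (r : (I * G)%type) (c : (I * E)%type) : CC := (r.1 == c.1)%:R * vv r.1 r.2 c.2.
Definition Bmat (r : (I * G)%type) (c : Cs) : CC := c2C (phi (r, c)).

Lemma rhoB r r' : cm (ptrace2 (proj phi)) r r' = \sum_c Bmat r c * (Bmat r' c)^*.
Proof. by rewrite cm_ptrace2; apply: eq_bigr => c _; rewrite cm_proj. Qed.

Lemma rhoA r r' : cm (ptrace2 (proj phi)) r r' = \sum_c Amat r c * (Amat r' c)^*.
Proof.
rewrite Hphi cm_cq sum_pair.
case: r => x g; case: r' => x' g' /=.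
under [RHS]eq_bigr => x0 _ do under eq_bigr => e _ do rewrite /Amat /= rmorphM /= conj_nat mulrACA.
under [RHS]eq_bigr => x0 _ do rewrite -big_distrr /=.
case: (eqVneq x x') => [<-|Hxx]; last first.
  rewrite mul0r big1 // => x0 _.
  case: (eqVneq x x0) => [<-|H]; first by move: Hxx; rewrite eq_sym => /negbTE ->; rewrite mulr0 mul0r.
  by rewrite !mul0r.
rewrite (_ : true%:R = 1) // mul1r.
under [RHS]eq_bigr => x0 _ do rewrite -natrM mulnb andbb.
rewrite sum_delta.
under eq_bigr => a _ do under eq_bigr => a' _ do rewrite cm_rhoAFZ /= big_distrr big_distrl /=.
under eq_bigr => a _ do rewrite exchange_big /=.
rewrite exchange_big /=; apply: eq_bigr => e _.
rewrite /vv big_distrl /=; apply: eq_bigr => a _.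
rewrite rmorph_sum big_distrr /=; apply: eq_bigr => a' _.
rewrite cm_proj -!/(ps _) rmorphM /= conjCK; ring.
Qed.


Variables (Y : (I * E)%type -> Cs -> CC) (Pi : (I * E)%type -> (I * E)%type -> CC) (c0 : Cs).
Hypothesis H1 : forall r c, \sum_k Amat r k * Y k c = Bmat r c.
Hypothesis H2 : forall r k, \sum_k' Amat r k' * Pi k' k = Amat r k.
Hypothesis H3 : forall k1 k2, \sum_c Y k1 c * (Y k2 c)^* = Pi k1 k2.
Hypothesis H4 : forall k1 k2, (Pi k1 k2)^* = Pi k2 k1.
Hypothesis H5 : forall k1 k2, \sum_k Pi k1 k * Pi k k2 = Pi k1 k2.

Definition Qm (c' k : (I * E)%type) : CC := (c' == k)%:R - Pi c' k.
Definition KK (k : option (I * E)%type) (c : Cs) (c' : (I * E)%type) : CC :=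
  match k with None => Y c' c | Some k => (c == c0)%:R * Qm c' k end.

Lemma QQ c2 c1 : \sum_k Qm c2 k * Qm k c1 = Qm c2 c1.
Proof.
rewrite /Qm.
under eq_bigr => k _ do rewrite mulrBl !mulrBr.
rewrite !sumrB (sum_delta c2 (fun i => (i == c1)%:R)) (sum_delta c2 (fun i => Pi i c1)).
rewrite (eq_bigr (fun i => (c1 == i)%:R * Pi c2 i)); last by move=> i _; rewrite mulrC eq_sym.
rewrite (sum_delta c1 (fun i => Pi c2 i)) H5.
by rewrite subrr subr0.
Qed.

Lemma Qm_conj c1 k : (Qm c1 k)^* = Qm k c1.
Proof. by rewrite /Qm rmorphB /= conj_nat H4 eq_sym. Qed.

Lemma KK_kraus c1 c2 : \sum_k \sum_c (KK k c c1)^* * KK k c c2 = (c1 == c2)%:R.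
Proof.
rewrite sum_option /=.
have -> : \sum_c (Y c1 c)^* * Y c2 c = Pi c2 c1.
  by rewrite -H3; apply: eq_bigr => c _; rewrite mulrC.
under eq_bigr => k _ do under eq_bigr => c _ do rewrite rmorphM /= conj_nat mulrACA -natrM mulnb andbb eq_sym.
under eq_bigr => k _ do rewrite sum_delta Qm_conj mulrC.
by rewrite QQ /Qm addrC subrK eq_sym.
Qed.

Lemma KA_None r c : \sum_c' Amat r c' * KK None c c' = Bmat r c.
Proof. exact: H1. Qed.

Lemma KA_Some k r c : \sum_c' Amat r c' * KK (Some k) c c' = 0.
Proof.
rewrite /KK /Qm.
under eq_bigr => c' _ do rewrite mulrCA mulrBr.
rewrite -big_distrr /= sumrB.
under eq_bigr => c' _ do rewrite mulrC.
by rewrite (eq_bigr (fun c' => (k == c')%:R * Amat r c')) ?sum_delta ?H2 ?subrr ?mulr0 // => c' _; rewrite eq_sym.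
Qed.

Definition Lk (k : option (I * E)%type) : Op (I * Cs)%type (I * E)%type :=
  fun u p => C2c (KK k u.2 (u.1, p.2) * (bas u.1 p.1)^*).
Lemma cm_Lk k u p : cm (Lk k) u p = KK k u.2 (u.1, p.2) * (bas u.1 p.1)^*.
Proof. by rewrite /cm /Lk c2CK. Qed.

Lemma L_kraus : is_kraus Lk.
Proof.
rewrite /is_kraus; apply: cm_ext => -[a e] -[a' e'].
rewrite cm_idop /cm /= c2C_sum.
under eq_bigr => k _ do rewrite -/(cm _ _ _) cm_mul.
under eq_bigr => k _ do under eq_bigr => u _ do rewrite cm_adj !cm_Lk rmorphM /= conjCK mulrACA.
rewrite exchange_big sum_pair /=.
have E1 : forall x : I, \sum_c \sum_k (KK k c (x, e))^* * KK k c (x, e') * (bas x a * (bas x a')^*)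
   = (e == e')%:R * (bas x a * (bas x a')^*).
  move=> x; rewrite exchange_big /=.
  under eq_bigr => k _ do rewrite -big_distrl /=.
  by rewrite -big_distrl /= KK_kraus xpair_eqE eqxx.
rewrite (eq_bigr _ (fun x _ => E1 x)) -big_distrr /= basO1 -natrM mulnb xpair_eqE andbC.
by [].
Qed.

Definition psiAE := ptrace2 (proj (psi_vec P sig)).
Lemma cm_psiAE p q : cm psiAE p q = \sum_g ps (p, g) * (ps (q, g))^*.
Proof. by rewrite cm_ptrace2; apply: eq_bigr => g _; rewrite cm_proj. Qed.

Definition phiXC := marg_XC (proj phi).
Lemma cm_phiXC u u' : cm phiXC u u' = \sum_g Bmat (u.1, g) u.2 * (Bmat (u'.1, g) u'.2)^*.
Proof. by rewrite /cm /phiXC /marg_XC c2C_sum; apply: eq_bigr => g _; rewrite c2C_mul c2C_conj. Qed.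

Definition hh k c x a g := \sum_e KK k c (x, e) * ps ((a, e), g).

Lemma LW k u g : \sum_t cm (Lk k) u t * ps (t, g) = \sum_c' Amat (u.1, g) c' * KK k u.2 c'.
Proof.
rewrite sum_pair [RHS]sum_pair /=.
under eq_bigr => a _ do under eq_bigr => e _ do rewrite cm_Lk /=.
rewrite exchange_big /=.
under [RHS]eq_bigr => x0 _ do under eq_bigr => e _ do rewrite /Amat /= -mulrA.
under [RHS]eq_bigr => x0 _ do rewrite -big_distrr /=.
rewrite sum_delta; apply: eq_bigr => e _.
rewrite /vv big_distrl /=; apply: eq_bigr => a _; ring.
Qed.

Lemma chan_psi : channel Lk psiAE = phiXC.
Proof.
apply: cm_ext => u u'.
rewrite (@channel_gram _ _ _ _ Lk psiAE (fun p g => ps (p, g)) cm_psiAE) sum_option /=.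
under eq_bigr => g _ do rewrite !LW !KA_None.
rewrite [X in _ + X]big1 ?addr0; first by rewrite cm_phiXC.
by move=> k _; apply: big1 => g _; rewrite !LW !KA_Some mul0r.
Qed.

Definition KE := kron (@idop I) (ptrace1 psiAE).
Definition WKE (p : (I * E)%type) (m : (I * (I * G))%type) : CC :=
  (p.1 == m.1)%:R * ps ((m.2.1, p.2), m.2.2).
Lemma cm_KE p q : cm KE p q = \sum_m WKE p m * (WKE q m)^*.
Proof.
rewrite cm_kron cm_idop cm_ptrace1 sum_pair.
under [RHS]eq_bigr => a1 _ do under eq_bigr => m _ do rewrite /WKE /= rmorphM /= conj_nat mulrACA -mulrA.
under [RHS]eq_bigr => a1 _ do rewrite -big_distrr /=.
rewrite sum_delta [RHS]sum_pair eq_sym.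
under [RHS]eq_bigr => i _ do rewrite -big_distrr.
rewrite -big_distrr /=; congr (_ * _).
by apply: eq_bigr => a _; rewrite cm_psiAE.
Qed.

Lemma LW2 k u a1 a0 g : \sum_t cm (Lk k) u t * WKE t (a1, (a0, g)) = (bas u.1 a1)^* * hh k u.2 u.1 a0 g.
Proof.
rewrite sum_pair /=.
transitivity (\sum_a (a1 == a)%:R * ((bas u.1 a)^* * hh k u.2 u.1 a0 g)); last exact: sum_delta.
apply: eq_bigr => a _; rewrite /hh big_distrr big_distrr /=; apply: eq_bigr => e _.
by rewrite cm_Lk /WKE /= eq_sym; ring.
Qed.

Definition Hs c c' x0 := \sum_k \sum_a \sum_g hh k c x0 a g * (hh k c' x0 a g)^*.

Lemma chan_KE x c x' c' : cm (channel Lk KE) (x, c) (x', c') = (x == x')%:R * Hs c c' x.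
Proof.
rewrite (@channel_gram _ _ _ _ Lk KE WKE cm_KE).
transitivity (\sum_k \sum_a0 \sum_g (\sum_a1 (bas x a1)^* * bas x' a1) * (hh k c x a0 g * (hh k c' x' a0 g)^*)).
  apply: eq_bigr => k _; rewrite sum_pair.
  under eq_bigr => a1 _ do rewrite sum_pair.
  rewrite exchange_big; apply: eq_bigr => a0 _; rewrite exchange_big; apply: eq_bigr => g _.
  rewrite big_distrl; apply: eq_bigr => a1 _; rewrite !LW2 rmorphM /= conjCK /=; ring.
under eq_bigr => k _ do under eq_bigr => a0 _ do under eq_bigr => g _ do rewrite basO2.
case: (eqVneq x x') => [<-|H].
  rewrite /Hs (_ : true%:R = 1) // mul1r; apply: eq_bigr => k _; apply: eq_bigr => a0 _; apply: eq_bigr => g _.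
  by rewrite mul1r.
rewrite (_ : false%:R = 0) // mul0r big1 // => k _; rewrite big1 // => a0 _; rewrite big1 // => g _.
by rewrite mul0r.
Qed.

Lemma hh_zero k c x a (g : G) : a != g.2 -> hh k c x a g = 0.
Proof. by move=> H; rewrite /hh big1 // => e _; rewrite ps_zero // mulr0. Qed.

Lemma KA_hh k x g c : \sum_c' Amat (x, g) c' * KK k c c' = (bas x g.2)^* * hh k c x g.2 g.
Proof.
rewrite sum_pair /=.
under eq_bigr => x0 _ do under eq_bigr => e _ do rewrite /Amat /= -mulrA.
under eq_bigr => x0 _ do rewrite -big_distrr /=.
rewrite sum_delta /hh big_distrr /=; apply: eq_bigr => e _.
by rewrite vv_E; ring.
Qed.

Lemma hhS_zero k c x0 (g : G) : hh (Some k) c x0 g.2 g = 0.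
Proof.
have := KA_Some k (x0, g) c; rewrite KA_hh => H.
transitivity ((bas x0 g.2)^* * bas x0 g.2 * (INR d)%:C * hh (Some k) c x0 g.2 g).
  by rewrite basO3 mul1r.
transitivity (bas x0 g.2 * (INR d)%:C * ((bas x0 g.2)^* * hh (Some k) c x0 g.2 g)); first by ring.
by rewrite H mulr0.
Qed.

Lemma BB_hh x0 g c c' : (INR d)%:C * (Bmat (x0, g) c * (Bmat (x0, g) c')^*)
  = \sum_k \sum_a hh k c x0 a g * (hh k c' x0 a g)^*.
Proof.
have Eh : forall k cc cc', \sum_a hh k cc x0 a g * (hh k cc' x0 a g)^* = hh k cc x0 g.2 g * (hh k cc' x0 g.2 g)^*.
  move=> k cc cc'; rewrite (bigD1 g.2) //= big1 ?addr0 // => a Ha.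
  by rewrite hh_zero // mul0r.
rewrite (eq_bigr _ (fun k _ => Eh k c c')) sum_option big1 ?addr0; last first.
  by move=> k _; rewrite hhS_zero mul0r.
rewrite -!KA_None !KA_hh.
transitivity ((bas x0 g.2)^* * bas x0 g.2 * (INR d)%:C * (hh None c x0 g.2 g * (hh None c' x0 g.2 g)^*)).
  by rewrite rmorphM /= conjCK; ring.
by rewrite basO3 mul1r.
Qed.

Definition KC := kron (@idop I) (ptrace1 phiXC).
Lemma cm_KC u u' : cm KC u u' = (u.1 == u'.1)%:R * \sum_x0 \sum_g Bmat (x0, g) u.2 * (Bmat (x0, g) u'.2)^*.
Proof. by rewrite cm_kron cm_idop cm_ptrace1; congr (_ * _); apply: eq_bigr => x0 _; rewrite cm_phiXC. Qed.

Lemma dKC c c' : (INR d)%:C * (\sum_x0 \sum_g Bmat (x0, g) c * (Bmat (x0, g) c')^*) = \sum_x0 Hs c c' x0.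
Proof.
rewrite big_distrr; apply: eq_bigr => x0 _; rewrite big_distrr /Hs /=.
under eq_bigr => g _ do rewrite BB_hh.
rewrite exchange_big; apply: eq_bigr => k _; rewrite exchange_big //.
Qed.

Definition WKC (u : (I * Cs)%type) (m : (I * (I * G))%type) : CC :=
  (u.1 == m.1)%:R * Bmat (m.2.1, m.2.2) u.2.
Lemma cm_KC_gram u u' : cm KC u u' = \sum_m WKC u m * (WKC u' m)^*.
Proof.
rewrite cm_KC sum_pair.
under [RHS]eq_bigr => a1 _ do under eq_bigr => m _ do rewrite /WKC /= rmorphM /= conj_nat mulrACA -mulrA.
under [RHS]eq_bigr => a1 _ do rewrite -big_distrr /=.
rewrite sum_delta [RHS]sum_pair eq_sym.
under [RHS]eq_bigr => i _ do rewrite -big_distrr.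
by rewrite -big_distrr /=.
Qed.

Definition Wd (u : (I * Cs)%type) (m : (I * (I * (option (I * E) * (I * G))))%type) : CC :=
  (u.1 == m.1)%:R * (m.2.1 != m.1)%:R * hh m.2.2.1 u.2 m.2.1 m.2.2.2.1 m.2.2.2.2.

Lemma sqb (b : bool) : (b%:R : CC) = b%:R * b%:R.
Proof. by case: b; rewrite ?mulr1 ?mulr0. Qed.

Lemma gramD x c x' c' : \sum_m Wd (x, c) m * (Wd (x', c') m)^*
   = (x' == x)%:R * \sum_x0 (x0 != x)%:R * Hs c c' x0.
Proof.
rewrite [LHS]sum_pair.
transitivity (\sum_x1 (x == x1)%:R * ((x' == x1)%:R * \sum_x0 (x0 != x1)%:R * Hs c c' x0)); last first.
  by rewrite sum_delta.
apply: eq_bigr => x1 _.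
rewrite [LHS]sum_pair mulrA big_distrr /=; apply: eq_bigr => x0 _.
rewrite [LHS]sum_pair /Hs mulrA big_distrr /=; apply: eq_bigr => k _.
rewrite [LHS]sum_pair big_distrr /=; apply: eq_bigr => a _.
rewrite big_distrr /=; apply: eq_bigr => g _.
rewrite /Wd /= !rmorphM /= !conj_nat.
rewrite [in RHS](sqb (x0 != x1)); ring.
Qed.

Definition Dm := subop (scale (INR d) KC) (channel Lk KE).

Lemma cm_Dm u u' : cm Dm u u' = \sum_m Wd u m * (Wd u' m)^*.
Proof.
case: u => x c; case: u' => x' c'.
rewrite gramD /Dm cm_subop cm_scale cm_KC chan_KE /= mulrCA dKC.
have Ex : \sum_x0 (x0 != x)%:R * Hs c c' x0 = \sum_x0 Hs c c' x0 - Hs c c' x.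
  rewrite [X in _ = X - _](bigD1 x) //= [in LHS](bigD1 x) //= eqxx mul0r add0r addrAC subrr add0r.
  by apply: eq_bigr => i ->; rewrite mul1r.
by rewrite Ex mulrBr eq_sym.
Qed.

Lemma loew : loewner_le (channel Lk KE) (scale (INR d) KC).
Proof. by apply: psd_gram; exists _, Wd; exact: cm_Dm. Qed.

Lemma psd_KE : psd KE.
Proof. by apply: psd_gram; exists _, WKE; exact: cm_KE. Qed.
Lemma psd_KC : psd KC.
Proof. by apply: psd_gram; exists _, WKC; exact: cm_KC_gram. Qed.
Lemma psd_chanKE : psd (channel Lk KE).
Proof. by apply: psd_gram; apply: gram_channel; exists _, WKE; exact: cm_KE. Qed.

Lemma ps_E a e f z : ps ((a, e), (f, z)) = (a == z)%:R * ((sqrt (P z))%:C * c2C (sig z (e, f))).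
Proof. by rewrite /ps /psi_vec; case: eqP => _; rewrite ?mul1r ?mul0r ?c2C_mul. Qed.

Hypothesis HP1 : \sum_(z < d) P z = 1.
Hypothesis Hsig : forall z, \sum_(k : (E * F)%type) Cnorm2 (sig z k) = 1.

Lemma sig_norm z : \sum_e \sum_f c2C (sig z (e, f)) * (c2C (sig z (e, f)))^* = 1.
Proof.
rewrite -(sum_pair (fun k => c2C (sig z k) * (c2C (sig z k))^*)).
rewrite (eq_bigr (fun k => Cnorm2 (sig z k) +i* 0)); first by rewrite sum_realC Hsig.
by move=> k _; rewrite mul_conj; case: (sig z k).
Qed.

Lemma tr_psiAE : trace psiAE = Defs.C1.
Proof.
apply: c2C_inj; rewrite c2C_trace c2C_C1.
under eq_bigr => p _ do rewrite cm_psiAE.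
rewrite exchange_big sum_pair /=.
transitivity (\sum_f \sum_z (P z)%:C * \sum_e c2C (sig z (e, f)) * (c2C (sig z (e, f)))^*).
  apply: eq_bigr => f _; apply: eq_bigr => z _.
  rewrite sum_pair.
  transitivity (\sum_a (z == a)%:R * ((P z)%:C * \sum_e c2C (sig z (e, f)) * (c2C (sig z (e, f)))^*)); last exact: sum_delta.
  apply: eq_bigr => a _; rewrite !big_distrr /=; apply: eq_bigr => e _.
  rewrite ps_E !rmorphM /= conj_nat conj_realC eq_sym.
  transitivity ((z == a)%:R * (z == a)%:R * ((sqrt (P z))%:C * (sqrt (P z))%:C) * (c2C (sig z (e, f)) * (c2C (sig z (e, f)))^*)); first by ring.
  by rewrite -sqb mul_realC sqrt_sqrt //; ring.
rewrite exchange_big /=.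
under eq_bigr => z _ do rewrite -big_distrr /= exchange_big sig_norm mulr1.
by rewrite sum_realC HP1.
Qed.

Lemma dens_psiAE : density psiAE.
Proof.
split; last exact: tr_psiAE.
by apply: psd_gram; exists _, (fun p g => ps (p, g)); exact: cm_psiAE.
Qed.

Lemma dens_phiXC : density phiXC.
Proof.
split.
  by apply: psd_gram; exists _, (fun u g => Bmat (u.1, g) u.2); exact: cm_phiXC.
by rewrite -chan_psi trace_channel; [exact: tr_psiAE | exact: L_kraus].
Qed.

Lemma tr_vv : \sum_x \sum_g \sum_e vv x g e * (vv x g e)^* = 1.
Proof.
rewrite -c2C_C1 -tr_psiAE c2C_trace sum_pair.
under [RHS]eq_bigr => a _ do under eq_bigr => e _ do rewrite cm_psiAE.
under [RHS]eq_bigr => a _ do rewrite exchange_big /=.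
rewrite [RHS]exchange_big /= exchange_big /=; apply eq_bigr => g _.
rewrite [LHS]exchange_big [RHS]exchange_big /=; apply: eq_bigr => e _.
rewrite [RHS](bigD1 g.2) //= [X in _ = _ + X]big1 ?addr0; last first.
  by move=> a Ha; rewrite ps_zero // mul0r.
transitivity (\sum_x (bas x g.2 * (bas x g.2)^*) * (ps ((g.2, e), g) * (ps ((g.2, e), g))^*)).
  by apply: eq_bigr => x _; rewrite vv_E rmorphM /= conjCK; ring.
by rewrite -big_distrl /= basO1 eqxx mul1r.
Qed.

End Main.

Theorem lemma3test (D : divergence_family) (HD : is_divergence D)
  (d : nat) (E F : finType) (P : 'I_d -> R) (sig : 'I_d -> prod E F -> cplx)
  (HP0 : forall z, Rle (IZR 0) (P z))
  (HP1 : \big[Rplus/IZR 0]_(z < d) P z = IZR 1)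
  (Hsig : forall z, \big[Rplus/IZR 0]_(k : prod E F) Cnorm2 (sig z k) = IZR 1)
  (Cs : finType) (phi : prod (prod 'I_d (prod F 'I_d)) Cs -> cplx)
  (Hphi : ptrace2 (proj phi) = cq_state (rho_AFZ (proj (psi_vec P sig)))) :
  Rbar_le (Dcond D (marg_XC (proj phi)))
          (Rbar_shift (Dcond D (ptrace2 (proj (psi_vec P sig)))) (ln (INR d))).
Proof.
case: HD => [Hdpi [Hscale [Hdom _]]].
have HP1' : \sum_(z < d) P z = 1 := HP1.
have Hsig' : forall z, \sum_(k : (E * F)%type) Cnorm2 (sig z k) = 1 := Hsig.
have Hdpos : Rlt (IZR 0) (INR d).
  case: (pickP (fun _ : 'I_d => true)) => [z _|Hno]; first exact: dpos z.
  exfalso; move: HP1'; rewrite big1 => [H|z]; last by have := Hno z.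
  by move: (@oner_eq0 R); rewrite -H eqxx.
have HAB : forall r r', \sum_c Amat P sig r c * (Amat P sig r' c)^* = \sum_c Bmat phi r c * (Bmat phi r' c)^*.
  by move=> r r'; rewrite -(rhoA Hphi) rhoB.
have [Y [Pi [H1 H2 H3 H4 H5]]] := uhlmann HAB.
case: (pickP (fun _ : Cs => true)) => [c0 _|Hno]; last first.
  exfalso.
  have Pi0 : forall k1 k2, Pi k1 k2 = 0.
    by move=> k1 k2; rewrite -H3 big1 // => c; have := Hno c.
  have A0 : forall r k, Amat P sig r k = 0.
    by move=> r k; rewrite -H2 big1 // => k' _; rewrite Pi0 mulr0.
  have := tr_vv HP0 HP1' Hsig'.
  rewrite big1 => [/esym/eqP|x _]; first by rewrite oner_eq0.
  rewrite big1 // => g _; rewrite big1 // => e _.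
  have := A0 (x, g) (x, e); rewrite /Amat /= eqxx mul1r => ->; by rewrite mul0r.
pose L := Lk Y Pi c0.
have LK : is_kraus L by apply: L_kraus.
change (Rbar_le (D _ (phiXC phi) (KC phi)) (Rbar_shift (D _ (psiAE P sig) (KE P sig)) (ln (INR d)))).
have chanE : channel L (psiAE P sig) = phiXC phi by apply: chan_psi.
have psdKE : psd (KE P sig) by apply: psd_KE.
have Hd1 := Hdpi _ _ _ L LK (psiAE P sig) (KE P sig) (dens_psiAE HP0 HP1' Hsig') psdKE.
rewrite chanE in Hd1.
have densX : density (phiXC phi) by apply: dens_phiXC.
have psdCK : psd (channel L (KE P sig)) by apply: psd_chanKE.
have lw : loewner_le (channel L (KE P sig)) (scale (INR d) (KC phi)) by apply: loew.
have Hd2 := Hdom _ (phiXC phi) (channel L (KE P sig)) (scale (INR d) (KC phi)) densX psdCK lw.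
have psdKC : psd (KC phi) by apply: psd_KC.
have Hs := Hscale _ (phiXC phi) (KC phi) (INR d) densX psdKC Hdpos.
rewrite Hs in Hd2.
move: Hd1 Hd2.
case: (D _ (phiXC phi) (KC phi)) => [a|]; case: (D _ (phiXC phi) (channel L (KE P sig))) => [m|];
  case: (D _ (psiAE P sig) (KE P sig)) => [b|] //=; lra.
Qed.


Local Close Scope ring_scope.
Local Close Scope complex_scope.
Delimit Scope R_scope with R.

Theorem lemma3 (D : divergence_family) (HD : is_divergence D)
  (d : nat) (E F : finType) (P : 'I_d -> R) (sig : 'I_d -> prod E F -> cplx)
  (HP0 : forall z, (0 <= P z)%R)
  (HP1 : \big[Rplus/0%R]_(z < d) P z = 1%R)
  (Hsig : forall z, \big[Rplus/0%R]_(k : prod E F) Cnorm2 (sig z k) = 1%R)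
  (Cs : finType) (phi : prod (prod 'I_d (prod F 'I_d)) Cs -> cplx)
  (Hphi : ptrace2 (proj phi) = cq_state (rho_AFZ (proj (psi_vec P sig)))) :
  (* H_down(A|E)_psi + H^perp_down(X_A|FZ)_psi <= log |A|, i.e.
     -D(psi_AE, I (x) psi_E) + D(phi_XC, I (x) phi_C) <= log d *)
  Rbar_le (Dcond D (marg_XC (proj phi)))
          (Rbar_shift (Dcond D (ptrace2 (proj (psi_vec P sig)))) (ln (INR d))).
Proof. exact: (lemma3test HD HP0 HP1 Hsig Hphi). Qed.
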